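(* Let $T$ be a finite tree with at least two vertices, $\mathbb{K}$ a field, $\boldsymbol{\alpha}=(\alpha_t)_{t\in T}$ a family of invertible elements of $\mathbb{K}$, $f$ a leaf of $T$ and $g$ its unique neighbor. Let $T'$ be the tree obtained by removing $f$, and for $\beta\in\mathbb{K}^*$ let $\boldsymbol{\alpha}'(\beta)$ be the family on $T'$ with $\alpha'_g(\beta)=\alpha_g\beta$ and $\alpha'_s(\beta)=\alpha_s$ for $s\neq g$. Let $T''$ be the forest obtained by removing $f$ and $g$, and let $\boldsymbol{\alpha}''$ be the family on $T''$ with $\alpha''_s=-\alpha_s/\alpha_f$ if $s$ is adjacent to $g$ in $T$, and $\alpha''_s=\alpha_s$ otherwise. Then $X_T(\boldsymbol{\alpha})$ is the disjoint union of a closed part (where $x_f=0$) isomorphic to $\mathbb{A}^1\times X_{T''}(\boldsymbol{\alpha}'')$ and an open part (where $x_f\neq 0$) which is fibered over $\mathbb{A}^1\setminus\{0\}$ (via $x_f$) with fiber over $\beta$ isomorphic to $X_{T'}(\boldsymbol{\alpha}'(\beta))$.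
   Context: For a finite tree $T$ write $s-t$ when vertices are adjacent. For a family $\boldsymbol{\alpha}=(\alpha_t)_{t\in T}$ of elements of $\mathbb{K}$, $X_T(\boldsymbol{\alpha})$ is the affine scheme over $\mathbb{K}$ with coordinates $x_t,x'_t$ ($t\in T$) defined by $x_t x'_t = 1+\alpha_t\prod_{s-t} x_s$ for all vertices $t$. For a disjoint union of trees $F$, $X_F$ is the product of the schemes associated with the connected components (and is a point if $F$ is empty). *)

(* Defs.v *)
(* Affine schemes are represented by their functor of points
   on commutative K-algebras; isomorphisms by natural bijections (Yoneda). *)
From HB Require Import structures.
From mathcomp Require Import all_boot all_order all_algebra.
Set Implicit Arguments. Unset Strict Implicit. Unset Printing Implicit Defensive.
Import GRing.Theory.
Local Open Scope ring_scope.

Definition is_tree (T : finType) (e : rel T) : Prop :=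
  symmetric e /\ irreflexive e /\ (forall x y : T, connect e x y) /\
  (forall c : seq T, uniq c -> (3 <= size c)%N -> ~~ cycle e c).

(* Points of X_V(a) with values in a K-algebra A.  Coordinates are indexed by
   V + V : inl t is x_t, inr t is x'_t.  For a forest this is literally the
   product of the schemes of its components (equations only involve neighbours). *)
Definition Xeq (K : fieldType) (V : finType) (e : rel V) (a : V -> K)
    (A : comAlgType K) (v : V + V -> A) : Prop :=
  forall t : V, v (inl t) * v (inr t) = 1 + a t *: \prod_(s | e t s) v (inl s).

Definition scheme_iso (K : fieldType) (I J : Type)
    (P : forall A : comAlgType K, (I -> A) -> Prop)
    (Q : forall A : comAlgType K, (J -> A) -> Prop) : Prop :=
  exists (phi : forall A : comAlgType K, (I -> A) -> (J -> A))
         (psi : forall A : comAlgType K, (J -> A) -> (I -> A)),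
    [/\ (forall A v, P A v -> Q A (phi A v)),
        (forall A w, Q A w -> P A (psi A w)),
        (forall A v, P A v -> psi A (phi A v) = v),
        (forall A w, Q A w -> phi A (psi A w) = w) &
        (forall (A B : comAlgType K) (h : {lrmorphism A -> B}) v,
            P A v -> phi B (h \o v) = h \o phi A v)].

Notation Tprime f := {t | t != f}.
Notation Tsecond f g := {t | (t != f) && (t != g)}.

Definition e' (T : finType) (e : rel T) (f : T) : rel (Tprime f) :=
  fun x y => e (val x) (val y).
Definition e'' (T : finType) (e : rel T) (f g : T) : rel (Tsecond f g) :=
  fun x y => e (val x) (val y).

Definition alpha' (K : fieldType) (T : finType) (f g : T) (a : T -> K) (beta : K)
  (s : Tprime f) : K :=
  if val s == g then a g * beta else a (val s).

Definition alpha'' (K : fieldType) (T : finType) (e : rel T) (f g : T) (a : T -> K)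
  (s : Tsecond f g) : K :=
  if e g (val s) then - a (val s) / a f else a (val s).

Arguments e' {T} e f.
Arguments e'' {T} e f g.
Arguments alpha' {K T} f g a beta s.
Arguments alpha'' {K T} e f g a s.

(* Main.v *)
From HB Require Import structures.
From mathcomp Require Import all_boot all_order all_algebra.
From Stdlib Require Import FunctionalExtensionality.
Import GRing.Theory.
Set Implicit Arguments. Unset Strict Implicit.
Local Open Scope ring_scope.
Require Import Defs.

Lemma prod_sig (R : comNzRingType) (I : finType) (p P : pred I) (F : I -> R) :
  \prod_(i | P i && p i) F i = \prod_(x : {x | p x} | P (val x)) F (val x).
Proof.
rewrite (reindex_omap (val : {x | p x} -> I) insub); last first.
  by move=> i /andP[_ pi]; rewrite insubT.
apply: eq_bigl=> -[i pi] /=; rewrite insubT /= pi andbT.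
by rewrite eqxx andbT.
Qed.

Section H.
Variables (K : fieldType) (T : finType) (e : rel T) (f g : T).
Hypothesis esym : symmetric e.
Hypothesis eirr : irreflexive e.
Hypothesis efg : e f g.
Hypothesis eleaf : forall s, e f s -> s = g.

Lemma prodT1 (A : comAlgType K) (F : T -> A) s : s != f ->
  \prod_(u | e s u) F u =
  (if s == g then F f else 1) * \prod_(u : Tprime f | e s (val u)) F (val u).
Proof.
move=> sf; rewrite -prod_sig.
case: eqP => [->|sg].
  by rewrite (bigD1 f) // esym.
rewrite mul1r; apply: eq_bigl => u; case: eqP => [->|]; last by rewrite andbT.
by rewrite andbF esym; apply/negP => /eleaf.
Qed.

Lemma prodT2 (A : comAlgType K) (F : T -> A) s : s != f -> s != g ->
  \prod_(u | e s u) F u =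
  (if e s g then F g else 1) * \prod_(u : Tsecond f g | e s (val u)) F (val u).
Proof.
move=> sf sg; rewrite -prod_sig.
have nf : e s f = false by apply/negP; rewrite esym => /eleaf /eqP; rewrite (negbTE sg).
case esg: (e s g).
  rewrite (bigD1 g) //; congr (_ * _); apply: eq_bigl => u.
  case: (eqVneq u f) => [->|uf]; first by rewrite nf.
  by rewrite andbC.
rewrite mul1r; apply: eq_bigl => u.
case: (eqVneq u f) => [->|uf]; first by rewrite nf.
case: (eqVneq u g) => [->|ug]; first by rewrite esg.
by rewrite andbT.
Qed.

Lemma prodf (A : comAlgType K) (F : T -> A) : \prod_(u | e f u) F u = F g.
Proof.
apply: big_pred1 => u /=; apply/idP/eqP => [/eleaf //|->//].
Qed.
End H.
Section Open.
Variables (K : fieldType) (T : finType) (e : rel T) (a : T -> K) (f g : T).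
Hypothesis esym : symmetric e.
Hypothesis eirr : irreflexive e.
Hypothesis efg : e f g.
Hypothesis eleaf : forall s, e f s -> s = g.
Hypothesis anz : forall t, a t != 0.
Variable beta : K.
Hypothesis bnz : beta != 0.

Definition phiO (A : comAlgType K) (v : T + T -> A) : Tprime f + Tprime f -> A :=
  fun i => match i with inl t => v (inl (val t)) | inr t => v (inr (val t)) end.
Definition xO (A : comAlgType K) (w : Tprime f + Tprime f -> A) (t : T) : A :=
  match (insub t : option (Tprime f)) with Some t' => w (inl t') | None => beta%:A end.
Definition psiO (A : comAlgType K) (w : Tprime f + Tprime f -> A) : T + T -> A :=
  fun i => match i with
  | inl t => xO w t
  | inr t => match (insub t : option (Tprime f)) with
             | Some t' => w (inr t')
             | None => beta^-1 *: (1 + a f *: xO w g) end end.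

Lemma fg : f != g. Proof. by apply/eqP => E; move: efg; rewrite E eirr. Qed.

Lemma open_iso : scheme_iso
    (fun A (v : T + T -> A) => Xeq e a v /\ v (inl f) = beta%:A)
    (fun A (w : Tprime f + Tprime f -> A) =>
       Xeq (e' e f) (alpha' f g a beta) w).
Proof.
exists phiO, psiO; split.
- move=> A v [Hv Hf] t; rewrite /= Hv (prodT1 esym efg eleaf) ?(valP t) //.
  rewrite /alpha' /e'; case: eqP => [Eg|_]; last by rewrite mul1r.
  by rewrite Hf mulr_algl scalerA; congr (1 + _ *: _); rewrite Eg.
- move=> A w Hw; split; last by rewrite /= /xO insubF // eqxx.
  move=> t; case: (eqVneq t f) => [->|tf].
  + rewrite /= /xO insubF ?eqxx // (prodf efg eleaf) mulr_algl scalerA mulfV //.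
    by rewrite scale1r.
  + rewrite /= (prodT1 esym efg eleaf) //.
    have := Hw (Sub t tf); rewrite /= /e' /alpha' /= /xO insubT /= => ->.
    congr (1 + _).
    have -> : \prod_(u : Tprime f | e t (val u)) xO w (val u) =
              \prod_(u : Tprime f | e t (val u)) w (inl u).
      by apply: eq_bigr => u _; rewrite /xO valK.
    case: eqP => [Eg|_]; last by rewrite mul1r.
    by rewrite /xO insubF ?eqxx // mulr_algl scalerA Eg.
- move=> A v [Hv Hf]; apply: functional_extensionality => -[t|t] /=.
  + rewrite /xO; case: insubP => [u _ <- //|]; by rewrite negbK => /eqP ->.
  + case: insubP => [u _ <- //|]; rewrite negbK => /eqP ->.
    have gf : g != f by rewrite eq_sym fg.
    rewrite /xO (insubT (fun t => t != f) gf) /=.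
    have := Hv f; rewrite (prodf efg eleaf) Hf mulr_algl => <-.
    by rewrite scalerA mulVf // scale1r.
- move=> A w Hw; apply: functional_extensionality => -[t|t] /=.
  + by rewrite /xO valK.
  + by rewrite valK.
- by move=> A B h v _; apply: functional_extensionality => -[t|t].
Qed.
End Open.

Section Closed.
Variables (K : fieldType) (T : finType) (e : rel T) (a : T -> K) (f g : T).
Hypothesis esym : symmetric e.
Hypothesis eirr : irreflexive e.
Hypothesis efg : e f g.
Hypothesis eleaf : forall s, e f s -> s = g.
Hypothesis anz : forall t, a t != 0.

Definition phiC (A : comAlgType K) (v : T + T -> A)
  : option (Tsecond f g + Tsecond f g) -> A :=
  fun o => match o with None => v (inr f)
  | Some (inl t) => v (inl (val t)) | Some (inr t) => v (inr (val t)) end.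
Definition xC (A : comAlgType K) (w : option (Tsecond f g + Tsecond f g) -> A)
  (t : T) : A :=
  match (insub t : option (Tsecond f g)) with
  | Some t' => w (Some (inl t'))
  | None => if t == f then 0 else (- (a f)^-1)%:A end.
Definition psiC (A : comAlgType K) (w : option (Tsecond f g + Tsecond f g) -> A)
  : T + T -> A :=
  fun i => match i with
  | inl t => xC w t
  | inr t => match (insub t : option (Tsecond f g)) with
             | Some t' => w (Some (inr t'))
             | None => if t == f then w None else (- a f)%:A end end.

Lemma xCf A w : xC (A:=A) w f = 0.
Proof. by rewrite /xC insubF ?eqxx. Qed.
Lemma xCg A w : xC (A:=A) w g = (- (a f)^-1)%:A.
Proof.
have gf : g != f by rewrite eq_sym (fg eirr efg).
by rewrite /xC insubF ?eqxx ?andbF // (negbTE gf).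
Qed.

Lemma egf : e g f. Proof. by rewrite esym. Qed.
Lemma gf : g != f. Proof. by rewrite eq_sym (fg eirr efg). Qed.

Lemma xg (A : comAlgType K) (v : T + T -> A) : Xeq e a v -> v (inl f) = 0 ->
    v (inl g) = (- (a f)^-1)%:A.
Proof.
  move=> Hv Hf; have := Hv f; rewrite (prodf efg eleaf) Hf mul0r => H.
  have H1 : a f *: v (inl g) = -1.
    by apply/eqP; rewrite -addr_eq0 addrC -H.
  by rewrite -[v (inl g)]scale1r -(mulVf (anz f)) -scalerA H1 scalerN scaleNr.
Qed.

Lemma xg' (A : comAlgType K) (v : T + T -> A) : Xeq e a v -> v (inl f) = 0 ->
    v (inr g) = (- a f)%:A.
Proof.
  move=> Hv Hf; have := Hv g; rewrite (bigD1 f egf) /= Hf mul0r scaler0 addr0.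
  rewrite (xg Hv Hf) => H.
  have H' : (- (a f)^-1) *: v (inr g) = 1 by rewrite -mulr_algl.
  by rewrite -[v (inr g)]scale1r -[1 in LHS](mulfV (anz f)) -mulrNN -scalerA H'.
Qed.

Lemma C1 (A : comAlgType K) (v : T + T -> A) : Xeq e a v /\ v (inl f) = 0 ->
  Xeq (e'' e f g) (alpha'' e f g a) (fun i => phiC v (Some i)).
Proof.
  move=> [Hv Hf] t.
  have /andP[tf tg] := valP t.
  rewrite /= Hv (prodT2 esym eleaf) // /alpha'' /e'' (esym g).
  case: ifP => _; last by rewrite mul1r.
  by rewrite (xg Hv Hf) mulr_algl scalerA mulrN mulNr.
Qed.

Lemma C2 (A : comAlgType K) w :
  Xeq (e'' e f g) (alpha'' e f g a) (fun i => w (Some i)) ->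
  Xeq e a (psiC (A:=A) w) /\ psiC w (inl f) = 0.
Proof.
  move=> Hw; split; last exact: xCf.
  move=> t; case: (eqVneq t f) => [->|tf].
    rewrite /= xCf mul0r (prodf efg eleaf) xCg scalerA mulrN mulfV //.
    by rewrite scaleNr scale1r subrr.
  case: (eqVneq t g) => [->|tg].
    rewrite /= xCg (insubF (P := fun t => (t != f) && (t != g))) ?eqxx ?andbF //.
    rewrite (negbTE gf) (bigD1 f egf) //= xCf mul0r scaler0 addr0.
    by rewrite mulr_algl scalerA mulrNN mulVf // scale1r.
  have Ht : (t != f) && (t != g) by rewrite tf tg.
  rewrite /= (prodT2 esym eleaf) //.
  have E1 : xC w t = w (Some (inl (Sub t Ht))) by rewrite /xC insubT.
  have := Hw (Sub t Ht); rewrite /= /e'' /alpha'' /= => H.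
  rewrite E1 insubT H.
  congr (1 + _).
  have -> : \prod_(u : Tsecond f g | e t (val u)) xC w (val u) =
            \prod_(u : Tsecond f g | e t (val u)) w (Some (inl u)).
    by apply: eq_bigr => u _; rewrite /xC valK.
  rewrite (esym g); case: ifP => _; last by rewrite mul1r.
  by rewrite xCg mulr_algl scalerA mulrN mulNr.
Qed.

Lemma C3 (A : comAlgType K) (v : T + T -> A) : Xeq e a v /\ v (inl f) = 0 ->
  psiC (phiC v) = v.
Proof.
  move=> [Hv Hf]; apply: functional_extensionality => -[t|t] /=.
  + rewrite /xC; case: insubP => [u _ <- //|].
    rewrite negb_and !negbK; case: (eqVneq t f) => [->|tf] /=; first by rewrite Hf.
    by move=> /eqP ->; rewrite (xg Hv Hf).
  + case: insubP => [u _ <- //|].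
    rewrite negb_and !negbK; case: (eqVneq t f) => [->|tf] //=.
    by move=> /eqP ->; rewrite (xg' Hv Hf).
Qed.

Lemma C4 (A : comAlgType K) w : phiC (psiC (A:=A) w) = w.
Proof.
  apply: functional_extensionality => -[[t|t]|] /=.
  + by rewrite /xC valK.
  + by rewrite valK.
  + by rewrite insubF ?eqxx.
Qed.

Lemma closed_iso : scheme_iso
    (fun A (v : T + T -> A) => Xeq e a v /\ v (inl f) = 0)
    (fun A (w : option (Tsecond f g + Tsecond f g) -> A) =>
       Xeq (e'' e f g) (alpha'' e f g a)
           (fun i => w (Some i))).
Proof.
exists phiC, psiC; split.
- exact: C1.
- exact: C2.
- exact: C3.
- by move=> A w _; exact: C4.
- by move=> A B h v _; apply: functional_extensionality => -[[t|t]|].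
Qed.
End Closed.

Theorem mainTheorem4 (K : fieldType) (T : finType) (e : rel T) (a : T -> K)
    (f g : T) :
  is_tree e -> (1 < #|T|)%N -> (forall t, a t != 0) ->
  e f g -> (forall s, e f s -> s = g) ->
  (* closed part x_f = 0  ~=  A^1 x X_{T''}(alpha'') *)
  scheme_iso
    (fun A (v : T + T -> A) => Xeq e a v /\ v (inl f) = 0)
    (fun A (w : option (Tsecond f g + Tsecond f g) -> A) =>
       Xeq (e'' e f g) (alpha'' e f g a)
           (fun i => w (Some i)))
  /\
  (* open part x_f <> 0: fibre over beta in A^1 \ {0}  ~=  X_{T'}(alpha'(beta)) *)
  (forall beta : K, beta != 0 ->
   scheme_iso
    (fun A (v : T + T -> A) => Xeq e a v /\ v (inl f) = beta%:A)
    (fun A (w : Tprime f + Tprime f -> A) =>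
       Xeq (e' e f) (alpha' f g a beta) w)).
Proof.
move=> [esym [eirr _]] _ anz efg eleaf; split.
  by apply: closed_iso.
by move=> beta bnz; apply: open_iso.
Qed.
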